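(* In the power control setting described in the context, for every $i\in\mathcal{K}$, $u_i(\tilde{\underline{p}})\ge u_i(\underline{p}^* )$, where $\underline{p}^*=(p_1^*,\dots,p_K^* )$.
   Context: There are $K\ge2$ transmitters $i\in\mathcal{K}=\{1,\dots,K\}$; $\sigma^2>0$ is the noise variance; transmitter $i$ has channel gain $g_i$ with $|g_i|^2>0$, rate $R_i>0$, and power $p_i\in[0,P_i^{\max}]$. For a power profile $\underline{p}$, $\mathrm{SINR}_i=\frac{p_i|g_i|^2}{\sum_{j\neq i}p_j|g_j|^2+\sigma^2}$ and $u_i(\underline{p})=\frac{R_i f(\mathrm{SINR}_i)}{p_i}$, where $f$ is a common sigmoidal efficiency function with $f(0)=0$. Let $\beta^*$ be the unique positive solution of $xf'(x)-f(x)=0$, assumed to satisfy $(K-1)\beta^*<1$; the one-shot Nash equilibrium is $p_i^*=\frac{\sigma^2}{|g_i|^2}\frac{\beta^*}{1-(K-1)\beta^*}$ (all users get SINR $\beta^*$). It is assumed that there exists $x_0\in]0,\frac1{K-1}[$ such that $\frac{f''(x)}{f'(x)}-\frac{2(K-1)}{1-(K-1)x}$ is strictly positive on $]0,x_0[$ and strictly negative on $]x_0,\frac1{K-1}[$; then $\tilde\gamma$ is the unique solution in $]0,\frac1{K-1}[$ of $x[1-(K-1)x]f'(x)-f(x)=0$, and the operating point is $\tilde p_i=\frac{\sigma^2}{|g_i|^2}\frac{\tilde\gamma}{1-(K-1)\tilde\gamma}$ (all users get SINR $\tilde\gamma$). The maximal powers are large enough that $p_i^*,\tilde p_i\le P_i^{\max}$.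 *)

(* Defs.v *)
From HB Require Import structures.
From mathcomp Require Import all_boot all_order all_algebra.
From mathcomp Require Import all_classical all_reals all_analysis.
Set Implicit Arguments. Unset Strict Implicit. Unset Printing Implicit Defensive.
Import Order.TTheory GRing.Theory Num.Theory.
Import numFieldNormedType.Exports.
Local Open Scope classical_set_scope.
Local Open Scope ring_scope.

Section Power.
Variable R : realType.

(* h i stands for |g_i|^2 (only the squared modulus of the gain matters). *)
Definition SINR (K : nat) (sigma2 : R) (h p : 'I_K -> R) (i : 'I_K) : R :=
  p i * h i / (\sum_(j < K | j != i) p j * h j + sigma2).

Definition utility (K : nat) (sigma2 : R) (h Rate : 'I_K -> R) (f : R -> R)
  (p : 'I_K -> R) (i : 'I_K) : R :=
  Rate i * f (SINR sigma2 h p i) / p i.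

Definition common_sinr_power (K : nat) (sigma2 : R) (h : 'I_K -> R) (c : R)
  (i : 'I_K) : R :=
  sigma2 / h i * (c / (1 - (K.-1)%:R * c)).

Definition sigmoidal (f : R -> R) : Prop :=
  {within `[0, +oo[, continuous f} /\
  (forall x, 0 < x -> derivable f x 1 /\ derivable (derive1 f) x 1) /\
  (forall x, 0 < x -> 0 < derive1 f x) /\
  exists a, 0 < a /\ (forall x, 0 < x < a -> 0 < derive1 (derive1 f) x) /\
                     (forall x, a < x -> derive1 (derive1 f) x < 0).
End Power.

(* Main.v *)
Require Import Defs.
From HB Require Import structures.
From mathcomp Require Import all_boot all_order all_algebra.
From mathcomp Require Import all_classical all_reals all_analysis.
From mathcomp Require Import ring lra.
Import Order.TTheory GRing.Theory Num.Theory.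
Import numFieldNormedType.Exports.
Local Open Scope classical_set_scope.
Local Open Scope ring_scope.


Lemma oo_l {R : realType} {a b y : R} : y \in `]a, b[ -> a < y.
Proof. by move=> h; rewrite (itvP h). Qed.
Lemma oo_r {R : realType} {a b y : R} : y \in `]a, b[ -> y < b.
Proof. by move=> h; rewrite (itvP h). Qed.

Lemma cc_l {R : realType} {a b y : R} : y \in `[a, b] -> a <= y.
Proof. by move=> h; rewrite (itvP h). Qed.
Lemma cc_r {R : realType} {a b y : R} : y \in `[a, b] -> y <= b.
Proof. by move=> h; rewrite (itvP h). Qed.

Section K.
Variable R : realType.
Variable f : R -> R.
Hypothesis hf : sigmoidal f.
Hypothesis hf0 : f 0 = 0.

Lemma D1 (x : R) : 0 < x -> is_derive x 1 f (derive1 f x).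
Proof. by move=> /(proj1 (proj2 hf)) [df _]; apply: DeriveDef => //; rewrite derive1E. Qed.

Lemma D2 (x : R) : 0 < x -> is_derive x 1 (derive1 f) (derive1 (derive1 f) x).
Proof. by move=> /(proj1 (proj2 hf)) [_ df]; apply: DeriveDef => //; rewrite derive1E. Qed.

Lemma Cf (a b : R) : 0 < a -> {within `[a, b], continuous f}.
Proof.
move=> ha; apply: derivable_within_continuous => x; rewrite in_itv /= => /andP[hx _].
exact: (proj1 ((proj1 (proj2 hf)) x (lt_le_trans ha hx))).
Qed.

Lemma Cf' (a b : R) : 0 < a -> {within `[a, b], continuous (derive1 f)}.
Proof.
move=> ha; apply: derivable_within_continuous => x; rewrite in_itv /= => /andP[hx _].
exact: (proj2 ((proj1 (proj2 hf)) x (lt_le_trans ha hx))).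
Qed.

Lemma Cf0 (b : R) : {within `[0, b], continuous f}.
Proof.
apply: (continuous_subspaceW _ (proj1 hf)).
move=> x /=; rewrite !in_itv /= andbT => /andP[] //.
Qed.


Lemma M_pos (a : R) : (forall x, 0 < x < a -> 0 < derive1 (derive1 f) x) ->
  forall x, 0 < x <= a -> 0 < x * derive1 f x - f x.
Proof.
move=> hpa x /andP[hx hxa].
have [xi hxi E] := MVT hx (fun y hy => D1 _ (oo_l hy)) (Cf0 x).
have hxi0 : 0 < xi by exact: oo_l hxi.
have hxix : xi < x by exact: oo_r hxi.
have [eta heta E2] := MVT hxix (fun y hy => D2 _ (lt_trans hxi0 (oo_l hy))) (Cf' xi x hxi0).
have h2 : 0 < derive1 (derive1 f) eta.
  apply: hpa; rewrite (lt_trans hxi0 (oo_l heta)) /=.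
  exact: (lt_le_trans (oo_r heta) hxa).
rewrite hf0 subr0 in E.
have h3 : 0 < (derive1 (derive1 f) eta) * (x - xi) by rewrite mulr_gt0 // subr_gt0.
rewrite -E2 in h3.
rewrite E; nra.
Qed.

Lemma DM (x : R) : 0 < x ->
  is_derive x 1 (fun y => y * derive1 f y - f y) (x * derive1 (derive1 f) x).
Proof.
move=> hx.
have H := is_deriveB (is_deriveM (is_derive_id x 1) (D2 x hx)) (D1 x hx).
apply: (is_derive_eq H).
by rewrite [_%:A]mulr1 addrK.
Qed.

Lemma Dg (k x : R) : 0 < x ->
  is_derive x 1 (fun y => f y * (y^-1 - k))
    (derive1 f x * (x^-1 - k) - f x * x^-2).
Proof.
move=> hx.
have Hv := is_deriveV (f := id) (lt0r_neq0 hx) (is_derive_id x 1).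
have H := is_deriveM (D1 x hx) (is_deriveB Hv (is_derive_cst k x 1)).
apply: (is_derive_eq H).
rewrite /= [_%:A]mulr1 subr0 /GRing.scale /=.
have -> : ([eta GRing.inv] - cst k) x = x^-1 - k by [].
rewrite mulrC; ring.
Qed.

Lemma key (k beta gam : R) : 0 < k -> 0 < beta ->
  beta * derive1 f beta - f beta = 0 -> k * beta < 1 ->
  0 < gam < 1 / k ->
  gam * (1 - k * gam) * derive1 f gam - f gam = 0 ->
  (forall x, 0 < x < 1 / k -> x * (1 - k * x) * derive1 f x - f x = 0 -> x = gam) ->
  f beta * (beta^-1 - k) <= f gam * (gam^-1 - k).
Proof.
move=> hk hb0 hbeq hkb /andP[hg0 hgk] hgeq hguniq.
have [_ [_ [hfp [a [ha [hconv hconc]]]]]] := hf.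
have hab : a < beta.
  rewrite ltNge; apply/negP => hba.
  by have := @M_pos a hconv beta; rewrite hb0 hba hbeq ltxx => /(_ isT).
have Eg : f gam = gam * (1 - k * gam) * derive1 f gam.
  by apply/eqP; rewrite eq_sym -subr_eq0 hgeq.
have Eb : f beta = beta * derive1 f beta.
  by apply/eqP; rewrite eq_sym -subr_eq0 hbeq.
have fpg := hfp _ hg0.
have fpb := hfp _ hb0.
have Mg : 0 < gam * derive1 f gam - f gam.
  rewrite Eg.
  have -> : gam * derive1 f gam - gam * (1 - k * gam) * derive1 f gam
     = k * (gam * gam) * derive1 f gam by ring.
  by rewrite !mulr_gt0.
have hgb : gam < beta.
  rewrite ltNge; apply/negP; rewrite le_eqVlt => /orP[/eqP ebg|hbg].
    by move: Mg; rewrite -ebg hbeq ltxx.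
  have cM : {within `[beta, gam], continuous (fun y => y * derive1 f y - f y)}.
    apply: derivable_within_continuous => y hy.
    have hy0 : 0 < y by apply: lt_le_trans hb0 (cc_l hy).
    by case: (DM y hy0).
  have [xi hxi E] := MVT hbg (fun y hy => DM _ (lt_trans hb0 (oo_l hy))) cM.
  have hxa : a < xi by apply: lt_trans hab (oo_l hxi).
  have := hconc _ hxa.
  have xi0 : 0 < xi by apply: lt_trans hb0 (oo_l hxi).
  have gb : 0 < gam - beta by rewrite subr_gt0.
  move: E Mg; rewrite hbeq subr0 => -> Hm Hc.
  have : 0 < - (derive1 (derive1 f) xi) by rewrite oppr_gt0.
  move: Hm; set u := derive1 (derive1 f) xi => Hm Hn.
  have : 0 < xi * (- u) * (gam - beta) by rewrite !mulr_gt0.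
  move: Hm; rewrite mulrN mulNr oppr_gt0 => Hm /ltW.
  by rewrite leNgt Hm.
have hbk : beta < 1 / k by rewrite ltr_pdivlMr // mulrC.
pose N := (fun y => y * (1 - k * y) * derive1 f y - f y).
have DN : forall y, 0 < y -> derivable N y 1.
  move=> y hy.
  have H := is_deriveB (is_deriveM (is_deriveM (is_derive_id y 1)
     (is_deriveB (is_derive_cst (1:R) y 1) (is_deriveM (is_derive_cst k y 1) (is_derive_id y 1))))
     (D2 y hy)) (D1 y hy).
  by case: H.
have Nb : N beta < 0.
  rewrite /N Eb.
  have -> : beta * (1 - k * beta) * derive1 f beta - beta * derive1 f beta
     = - (k * (beta * beta) * derive1 f beta) by ring.
  by rewrite oppr_lt0 !mulr_gt0.
have cg : {within `[gam, beta], continuous (fun y => f y * (y^-1 - k))}.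
  apply: derivable_within_continuous => y hy.
  have hy0 : 0 < y by apply: lt_le_trans hg0 (cc_l hy).
  by case: (Dg k y hy0).
have [xi hxi E] := MVT hgb (fun y hy => Dg k _ (lt_trans hg0 (oo_l hy))) cg.
have xi0 : 0 < xi by apply: lt_trans hg0 (oo_l hxi).
have Nxi : N xi < 0.
  rewrite ltNge; apply/negP => hN.
  have cN : {within `[xi, beta], continuous N}.
    apply: derivable_within_continuous => y hy.
    exact: DN (lt_le_trans xi0 (cc_l hy)).
  have hxib : xi <= beta by apply: ltW (oo_r hxi).
  have [c hc Nc] : exists2 c, c \in `[xi, beta] & N c = 0.
    apply: IVT hxib cN _.
    by rewrite ge_min (ltW Nb) orbT le_max hN.
  have c0 : gam < c by apply: lt_le_trans (oo_l hxi) (cc_l hc).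
  have hc1 : 0 < c < 1 / k.
    by rewrite (lt_trans hg0 c0) /= (le_lt_trans (cc_r hc) hbk).
  by move: (hguniq c hc1 Nc) c0 => ->; rewrite ltxx.
have Eg' : derive1 f xi * (xi^-1 - k) - f xi / xi ^+ 2 = N xi / xi ^+ 2.
  by rewrite /N; field; rewrite gt_eqF.
rewrite Eg' in E.
have : N xi / xi ^+ 2 * (beta - gam) < 0.
  by rewrite nmulr_rlt0 ?subr_gt0 // pmulr_llt0 // invr_gt0 exprn_gt0.
rewrite -E subr_lt0; exact: ltW.
Qed.

End K.

Lemma util_common (R : realType) (K : nat) (sigma2 : R) (h Rate : 'I_K -> R)
  (f : R -> R) (c : R) (i : 'I_K) :
  0 < sigma2 -> (forall j, 0 < h j) -> 0 < c -> (K.-1)%:R * c < 1 ->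
  utility sigma2 h Rate f (common_sinr_power sigma2 h c) i =
  Rate i * h i / sigma2 * (f c * (c^-1 - (K.-1)%:R)).
Proof.
move=> hs hh hc hkc.
have hq : 0 < 1 - (K.-1)%:R * c by rewrite subr_gt0.
have hS : \sum_(j < K | j != i) common_sinr_power sigma2 h c j * h j
   = (K.-1)%:R * (sigma2 * (c / (1 - (K.-1)%:R * c))).
  rewrite (eq_bigr (fun _ => sigma2 * (c / (1 - (K.-1)%:R * c)))); last first.
    move=> j _; rewrite /common_sinr_power; have := hh j => hj.
    by field; rewrite ?gt_eqF.
  rewrite sumr_const.
  have -> : #|(fun j : 'I_K => j != i)| = K.-1 by rewrite -[in RHS](card_ord K) -(cardC1 i).
  by rewrite [RHS]GRing.mulr_natl.
have hsinr : SINR sigma2 h (common_sinr_power sigma2 h c) i = c.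
  rewrite /SINR hS /common_sinr_power; have := hh i => hi.
  field.
  have -> : (K.-1)%:R * (sigma2 * c) + sigma2 * (1 - (K.-1)%:R * c) = sigma2 by ring.
  by rewrite !gt_eqF.
rewrite /utility hsinr /common_sinr_power; have := hh i => hi.
field.
by rewrite !gt_eqF.
Qed.

Theorem proposition7 (R : realType) (K : nat) (hK : (2 <= K)%N)
  (sigma2 : R) (hs : 0 < sigma2)
  (h Rate Pmax : 'I_K -> R)
  (hh : forall i, 0 < h i) (hR : forall i, 0 < Rate i)
  (f : R -> R) (hf : sigmoidal f) (hf0 : f 0 = 0)
  (beta : R) (hb0 : 0 < beta) (hbeq : beta * derive1 f beta - f beta = 0)
  (hbuniq : forall x, 0 < x -> x * derive1 f x - f x = 0 -> x = beta)
  (hbK : (K.-1)%:R * beta < 1)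
  (x0 : R) (hx0 : 0 < x0 < 1 / (K.-1)%:R)
  (hpos : forall x, 0 < x < x0 ->
     0 < derive1 (derive1 f) x / derive1 f x - 2 * (K.-1)%:R / (1 - (K.-1)%:R * x))
  (hneg : forall x, x0 < x < 1 / (K.-1)%:R ->
     derive1 (derive1 f) x / derive1 f x - 2 * (K.-1)%:R / (1 - (K.-1)%:R * x) < 0)
  (gam : R) (hg : 0 < gam < 1 / (K.-1)%:R)
  (hgeq : gam * (1 - (K.-1)%:R * gam) * derive1 f gam - f gam = 0)
  (hguniq : forall x, 0 < x < 1 / (K.-1)%:R ->
     x * (1 - (K.-1)%:R * x) * derive1 f x - f x = 0 -> x = gam)
  (hPmax : forall i, common_sinr_power sigma2 h beta i <= Pmax i /\
                     common_sinr_power sigma2 h gam i <= Pmax i) :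
  forall i : 'I_K,
    utility sigma2 h Rate f (common_sinr_power sigma2 h gam) i >=
    utility sigma2 h Rate f (common_sinr_power sigma2 h beta) i.

Proof.
move=> i.
have hk : 0 < (K.-1)%:R :> R by rewrite ltr0n -ltnS (ltn_predK hK).
have [hg0 hgk] := andP hg.
have hkg : (K.-1)%:R * gam < 1 by rewrite mulrC -ltr_pdivlMr.
rewrite /Order.ge /= !util_common //.
have hC : 0 < Rate i * h i / sigma2 by rewrite !mulr_gt0 ?invr_gt0.
rewrite ler_pM2l //.
exact: (@key R f hf hf0 _ _ _ hk hb0 hbeq hbK hg hgeq hguniq).
Qed.
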